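(* Let $h_{s,r}$ be a Hermitian operator on $\mathcal H_s\otimes\mathcal H_r\cong\mathbb C^2\otimes\mathbb C^2$ (qubits $s$ and $r$) which is not $(s,\eta)$-gapped. Then there exists a Hermitian operator $\hat h_r$ acting nontrivially only on qubit $r$ (i.e. of the form $I_s\otimes g_r$) such that $\|h_{s,r}-\hat h_r\|\le 4\eta$.
   Context: Pauli matrices: $\sigma^{(0)}=I$, $\sigma^{(1)}=X=\begin{pmatrix}0&1\\1&0\end{pmatrix}$, $\sigma^{(2)}=Y=\begin{pmatrix}0&-i\\i&0\end{pmatrix}$, $\sigma^{(3)}=Z=\begin{pmatrix}1&0\\0&-1\end{pmatrix}$. Every operator on two qubits $s,r$ has a unique local Pauli decomposition $h_{s,r}=\sum_{\alpha=0}^3 A_s^{(\alpha)}\otimes\sigma_r^{(\alpha)}$ with $A_s^{(\alpha)}\in\mathbb C^{2\times2}$ (Hermitian when $h_{s,r}$ is). For Hermitian $A\in\mathbb C^{2\times2}$, $\Delta(A)=\lambda_{\max}(A)-\lambda_{\min}(A)$ is its spectral gap. A Hermitian $h_{s,r}$ is $(s,\eta)$-gapped if some $A_s^{(\alpha)}$ in this decomposition satisfies $\Delta(A_s^{(\alpha)})\ge\eta$. $\|\cdot\|$ is the operator norm. *)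

(* Defs.v *)
From HB Require Import structures.
From mathcomp Require Import all_boot all_order all_algebra.
From mathcomp Require Import all_classical reals.
From mathcomp.real_closed Require Import complex mxtens.
Set Implicit Arguments. Unset Strict Implicit. Unset Printing Implicit Defensive.
Import Order.TTheory GRing.Theory Num.Theory.
Local Open Scope ring_scope.
Local Open Scope complex_scope.
Local Open Scope classical_set_scope.

Section Defs.
Variable R : realType.

Definition cabs2 (z : R[i]) : R := (complex.Re z) ^+ 2 + (complex.Im z) ^+ 2.

Definition vnorm n (v : 'cV[R[i]]_n) : R := Num.sqrt (\sum_(k < n) cabs2 (v k 0)).

Definition opnorm n (M : 'M[R[i]]_n) : R :=
  sup [set vnorm (M *m v) | v in [set v : 'cV[R[i]]_n | vnorm v = 1]].

Definition adjmx m n (A : 'M[R[i]]_(m, n)) : 'M[R[i]]_(n, m) := (map_mx (@conjc R) A)^T.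
Definition hermitian_mx n (A : 'M[R[i]]_n) : Prop := A = adjmx A.

Definition spectrum n (A : 'M[R[i]]_n) : set R :=
  [set l : R | exists2 v : 'cV[R[i]]_n, v != 0 & A *m v = l%:C *: v].
Definition spectral_gap n (A : 'M[R[i]]_n) : R := sup (spectrum A) - inf (spectrum A).

Definition pauliX : 'M[R[i]]_2 := \matrix_(i < 2, j < 2) (if i == j then 0 else 1).
Definition pauliY : 'M[R[i]]_2 :=
  \matrix_(i < 2, j < 2) (if i == j then 0 else if (val i == 0)%N then - 'i else 'i).
Definition pauliZ : 'M[R[i]]_2 :=
  \matrix_(i < 2, j < 2) (if i == j then (if (val i == 0)%N then 1 else -1) else 0).
Definition pauli (a : 'I_4) : 'M[R[i]]_2 :=
  match val a with 0 => 1%:M | 1 => pauliX | 2 => pauliY | _ => pauliZ end.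

(* h on H_s (x) H_r, qubit s = first tensor factor.
   (s,eta)-gapped: some coefficient A_s^(alpha) of the (unique) local Pauli
   decomposition h = sum_alpha A_s^(alpha) (x) sigma_r^(alpha) has gap >= eta. *)
Definition s_gapped (h : 'M[R[i]]_(2 * 2)) (eta : R) : Prop :=
  exists A : 'I_4 -> 'M[R[i]]_2,
    h = \sum_(a < 4) (A a *t pauli a) /\ exists a : 'I_4, eta <= spectral_gap (A a).

End Defs.

(* Main.v *)
Require Import Defs.
From HB Require Import structures.
From mathcomp Require Import all_boot all_order all_algebra.
From mathcomp Require Import all_classical reals.
From mathcomp.real_closed Require Import complex mxtens.
From mathcomp Require Import ring lra.
Import Order.TTheory GRing.Theory Num.Theory.
Local Open Scope ring_scope.
Section S.
Local Open Scope complex_scope.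
Variable R : realType.

Definition M2 (p q : R) (z : R[i]) : 'M[R[i]]_2 :=
  \matrix_(i < 2, j < 2) (match val i, val j with
     | 0, 0 => p%:C | 0, _ => z | _, 0 => conjc z | _, _ => q%:C end)%N.

Lemma M2_mul p q z (v : 'cV[R[i]]_2) :
  M2 p q z *m v = \col_(i < 2) (if val i == 0%N then p%:C * v ord0 0 + z * v (lift ord0 ord0) 0
                                else conjc z * v ord0 0 + q%:C * v (lift ord0 ord0) 0).
Proof.
apply/matrixP => i j; rewrite (ord1 j) !mxE big_ord_recl big_ord1 !mxE.
by case: i => [[|[|//]] Hi].
Qed.

Lemma cv_neq0 (v : 'cV[R[i]]_2) : v != 0 -> v ord0 0 != 0 \/ v (lift ord0 ord0) 0 != 0.
Proof.
move=> vn0; case: (eqVneq (v ord0 0) 0) => h0; last by left.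
case: (eqVneq (v (lift ord0 ord0) 0) 0) => h1; last by right.
exfalso; move/eqP: vn0; apply; apply/matrixP => i j; rewrite (ord1 j) mxE.
case: i => [[|[|//]] Hi].
  by rewrite -h0; congr (v _ _); apply: val_inj.
by rewrite -h1; congr (v _ _); apply: val_inj.
Qed.

Lemma spec_eq p q z l : spectrum (M2 p q z) l -> (p - l) * (q - l) = cabs2 z.
Proof.
case=> v vn0; rewrite M2_mul => H.
move/matrixP: H => H; have e0 := H ord0 0.
have e1 := H (lift ord0 ord0) 0.
move: e0 e1 => /=; rewrite !mxE /= => e0 e1.
set v0 := v ord0 0 in e0 e1 *; set v1 := v (lift ord0 ord0) 0 in e0 e1 *.
have k0 : (((p - l) * (q - l))%:C - z * conjc z) * v0 = 0.
  have -> : (((p - l) * (q - l))%:C - z * conjc z) * v0 =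
    (q%:C - l%:C) * (p%:C * v0 + z * v1 - l%:C * v0) - z * (conjc z * v0 + q%:C * v1 - l%:C * v1).
    rewrite rmorphM rmorphB /= rmorphB /=; ring.
  by rewrite e0 e1 !subrr !mulr0 subrr.
have k1 : (((p - l) * (q - l))%:C - z * conjc z) * v1 = 0.
  have -> : (((p - l) * (q - l))%:C - z * conjc z) * v1 =
    (p%:C - l%:C) * (conjc z * v0 + q%:C * v1 - l%:C * v1) - conjc z * (p%:C * v0 + z * v1 - l%:C * v0).
    rewrite rmorphM rmorphB /= rmorphB /=; ring.
  by rewrite e0 e1 !subrr !mulr0 subrr.
have : ((p - l) * (q - l))%:C - z * conjc z = 0.
  case: (cv_neq0 v vn0) => hv.
    by move/eqP: k0; rewrite mulf_eq0 (negbTE hv) orbF => /eqP.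
  by move/eqP: k1; rewrite mulf_eq0 (negbTE hv) orbF => /eqP.
clear -R; case: z => a b; rewrite /cabs2 /=; simpc => /eqP; rewrite eq_complex /= => /andP[/eqP h _].
lra.
Qed.
Lemma cabs2_ge0 (z : R[i]) : 0 <= cabs2 z.
Proof. by rewrite /cabs2 addr_ge0 // sqr_ge0. Qed.

Lemma eig_top p q z :
  spectrum (M2 p q z) ((p + q) / 2 + Num.sqrt (((p - q) / 2) ^+ 2 + cabs2 z)).
Proof.
set e := (p - q) / 2; set d := Num.sqrt _.
have hd : d ^+ 2 = e ^+ 2 + cabs2 z by rewrite sqr_sqrtr // addr_ge0 ?sqr_ge0 ?cabs2_ge0.
have d0 : 0 <= d by rewrite sqrtr_ge0.
have c0 := cabs2_ge0 z.
have ede : -d <= e <= d.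
  rewrite -ler_norml /d -sqrtr_sqr; apply: ler_wsqrtr; lra.
clearbody d; case/andP: ede => ed1 ed2.
case: (ltrP 0 (d + e)) => hde.
  exists (\col_(i < 2) (if val i == 0%N then (d + e)%:C else conjc z)).
    apply/negP => /eqP/matrixP/(_ ord0 0); rewrite !mxE /= => /eqP.
    by rewrite eq_complex /= eqxx andbT; apply/negP; rewrite gt_eqF.
  rewrite M2_mul; apply/matrixP => i j; rewrite (ord1 j) !mxE /=.
  move: hd; rewrite /cabs2 /e; case: z {c0} => a b /= hd.
  case: i => [[|[|//]] Hi] /=; simpc; apply/eqP; rewrite eq_complex /=; apply/andP; split; apply/eqP.
  - have hab : a * a + b * b = d ^+ 2 - ((p - q) / 2) ^+ 2 by rewrite hd; ring.
    by rewrite hab; (field; done).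
  - ring.
  - (field; done).
  - (field; done).
have de : d = - e by lra.
have z0 : z = 0.
  move: hd c0; rewrite de sqrrN => /eqP; rewrite -subr_eq0 opprD addrA subrr add0r oppr_eq0 => /eqP.
  case: z => a b; rewrite /cabs2 /= => hz _; apply/eqP; rewrite eq_complex /=.
  have ha : a = 0 by nra.
  have hb : b = 0 by nra.
  by rewrite ha hb eqxx.
exists (\col_(i < 2) (if val i == 0%N then 0 else 1)).
  apply/negP => /eqP/matrixP/(_ (lift ord0 ord0) 0); rewrite !mxE /= => /eqP.
  by rewrite oner_eq0.
rewrite M2_mul z0; apply/matrixP => i j; rewrite (ord1 j) !mxE /=.
case: i => [[|[|//]] Hi] /=; simpc; apply/eqP; rewrite eq_complex /=; apply/andP; split; apply/eqP.
- ring.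
- ring.
- rewrite de /e; (field; done).
- ring.
Qed.
Lemma spec_opp n (A : 'M[R[i]]_n) l : spectrum (- A) l -> spectrum A (- l).
Proof.
case=> v vn0 H; exists v => //.
by rewrite rmorphN /= scaleNr -H mulNmx opprK.
Qed.

Lemma M2_opp p q z : M2 (- p) (- q) (- z) = - M2 p q z.
Proof.
apply/matrixP => i j; rewrite !mxE.
case: i => [[|[|//]] Hi]; case: j => [[|[|//]] Hj] /=; rewrite ?rmorphN //.
Qed.

Lemma cabs2N (z : R[i]) : cabs2 (- z) = cabs2 z.
Proof. by case: z => a b; rewrite /cabs2 /= !sqrrN. Qed.

Lemma eig_bot p q z :
  spectrum (M2 p q z) ((p + q) / 2 - Num.sqrt (((p - q) / 2) ^+ 2 + cabs2 z)).
Proof.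
have := eig_top (- p) (- q) (- z); rewrite M2_opp cabs2N => /spec_opp.
congr (spectrum _ _).
have -> : ((- p - - q) / 2) ^+ 2 = ((p - q) / 2) ^+ 2.
  by rewrite -sqrrN; congr (_ ^+ 2); field.
by field.
Qed.

Lemma gap_M2 p q z :
  (p - q) ^+ 2 + 4 * cabs2 z <= spectral_gap (M2 p q z) ^+ 2 /\ 0 <= spectral_gap (M2 p q z).
Proof.
set S := spectrum (M2 p q z).
set m := (p + q) / 2; set e := (p - q) / 2.
set d := Num.sqrt (e ^+ 2 + cabs2 z).
have c0 := cabs2_ge0 z.
have hd : d ^+ 2 = e ^+ 2 + cabs2 z by rewrite sqr_sqrtr // addr_ge0 ?sqr_ge0.
have d0 : 0 <= d by rewrite sqrtr_ge0.
have top : S (m + d) by apply: eig_top.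
have bot : S (m - d) by apply: eig_bot.
have bnd : forall l, S l -> m - d <= l <= m + d.
  move=> l /spec_eq hl.
  have : (l - m - d) * (l - m + d) = 0.
    move: hd hl; rewrite /m /e => hd hl; nra.
  move/eqP; rewrite mulf_eq0 => /orP[] /eqP h; apply/andP; split; lra.
have hub : has_ubound S by exists (m + d) => y /bnd /andP[].
have hlb : has_lbound S by exists (m - d) => y /bnd /andP[].
have h1 := ub_le_sup hub top.
have h2 := ge_inf hlb bot.
rewrite /spectral_gap -/S.
have g : 2 * d <= sup S - inf S by lra.
split; last by lra.
have -> : (p - q) ^+ 2 + 4 * cabs2 z = (2 * d) ^+ 2 by rewrite exprMn hd /e; field.
nra.
Qed.
Lemma lebE m n : Nat.leb m n = (m <= n)%N.
Proof. by elim: m n => [|m IH] [|n] //=; rewrite IH. Qed.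
Lemma ltbE m n : Nat.ltb m n = (m < n)%N.
Proof. by rewrite /Nat.ltb lebE. Qed.

Definition hr (h : 'M[R[i]]_(2 * 2)) (i j : nat) : R := complex.Re (h (inord i) (inord j)).
Definition hi (h : 'M[R[i]]_(2 * 2)) (i j : nat) : R := complex.Im (h (inord i) (inord j)).
Definition X h i j := if Nat.leb i j then hr h i j else hr h j i.
Definition Y h i j := if Nat.ltb i j then hi h i j else if Nat.ltb j i then - hi h j i else 0.

Lemma hX h : hermitian_mx h -> forall I J : 'I_(2 * 2), h I J = X h I J +i* Y h I J.
Proof.
move=> H.
have hc : forall I J, h I J = conjc (h J I) by move=> I J; rewrite {1}H !mxE.
move=> I J; rewrite /X /Y /hr /hi !lebE !ltbE !inord_val.
case: (ltngtP I J) => hIJ.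
- by case: (h I J).
- by rewrite hc; case: (h J I).
- have e : I = J by apply: val_inj.
  subst J; have := hc I I; case: (h I I) => a b /= [] hb.
  by congr Complex; lra.
Qed.
Definition P h (a : 'I_4) : R := match val a with
  | 0 => (X h 0 0 + X h 1 1) / 2 | 1 => X h 0 1 | 2 => - Y h 0 1
  | _ => (X h 0 0 - X h 1 1) / 2 end%N.
Definition Q h (a : 'I_4) : R := match val a with
  | 0 => (X h 2 2 + X h 3 3) / 2 | 1 => X h 2 3 | 2 => - Y h 2 3
  | _ => (X h 2 2 - X h 3 3) / 2 end%N.
Definition Z h (a : 'I_4) : R[i] := match val a with
  | 0 => ((X h 0 2 + X h 1 3) / 2) +i* ((Y h 0 2 + Y h 1 3) / 2)
  | 1 => ((X h 0 3 + X h 1 2) / 2) +i* ((Y h 0 3 + Y h 1 2) / 2)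
  | 2 => (- (Y h 0 3 - Y h 1 2) / 2) +i* ((X h 0 3 - X h 1 2) / 2)
  | _ => ((X h 0 2 - X h 1 3) / 2) +i* ((Y h 0 2 - Y h 1 3) / 2) end%N.

Lemma decomp h : hermitian_mx h ->
  h = \sum_(a < 4) (M2 (P h a) (Q h a) (Z h a) *t pauli R a).
Proof.
move=> H; apply/matrixP => I J.
rewrite -[I]mxtens_unindexK -[J]mxtens_unindexK.
move: (mxtens_unindex I) (mxtens_unindex J) => [i1 i2] [j1 j2].
rewrite hX // summxE !big_ord_recl big_ord0 addr0 !tensmxE.
case: i1 => [[|[|//]] Hi1].
all: case: i2 => [[|[|//]] Hi2].
all: case: j1 => [[|[|//]] Hj1].
all: case: j2 => [[|[|//]] Hj2].
all: rewrite /= /muln /addn /= /pauli /= !mxE /= /P /Q /Z /X /Y /=.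
all: try rewrite -[(1 : R[i])]/(1 +i* 0); try rewrite -[(0 : R[i])]/(0 +i* 0).
all: rewrite /real_complex_def; simpc.
all: apply/eqP; rewrite eq_complex /=; apply/andP; split; apply/eqP.
all: by field.
Qed.

Lemma cs4 (a b : 'I_4 -> R[i]) :
  cabs2 (\sum_(j < 4) a j * b j) <= (\sum_(j < 4) cabs2 (a j)) * (\sum_(j < 4) cabs2 (b j)).
Proof.
rewrite !big_ord_recl !big_ord0 !addr0.
move: (a ord0) (a (lift ord0 ord0)) (a (lift ord0 (lift ord0 ord0))) (a (lift ord0 (lift ord0 (lift ord0 ord0)))).
move: (b ord0) (b (lift ord0 ord0)) (b (lift ord0 (lift ord0 ord0))) (b (lift ord0 (lift ord0 (lift ord0 ord0)))).
move=> [t0 w0] [t1 w1] [t2 w2] [t3 w3] [r0 s0] [r1 s1] [r2 s2] [r3 s3].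
simpc; rewrite /cabs2 /= -subr_ge0.
have -> : ((r0 ^+ 2 + s0 ^+ 2) + ((r1 ^+ 2 + s1 ^+ 2) + ((r2 ^+ 2 + s2 ^+ 2) + (r3 ^+ 2 + s3 ^+ 2)))) *
  ((t0 ^+ 2 + w0 ^+ 2) + ((t1 ^+ 2 + w1 ^+ 2) + ((t2 ^+ 2 + w2 ^+ 2) + (t3 ^+ 2 + w3 ^+ 2)))) -
  ((r0 * t0 - s0 * w0 + (r1 * t1 - s1 * w1 + (r2 * t2 - s2 * w2 + (r3 * t3 - s3 * w3)))) ^+ 2 +
   (r0 * w0 + s0 * t0 + (r1 * w1 + s1 * t1 + (r2 * w2 + s2 * t2 + (r3 * w3 + s3 * t3)))) ^+ 2)
  = (r0 * t1 + s0 * w1 - r1 * t0 - s1 * w0) ^+ 2 + (s0 * t1 - r0 * w1 - s1 * t0 + r1 * w0) ^+ 2 + (r0 * t2 + s0 * w2 - r2 * t0 - s2 * w0) ^+ 2 + (s0 * t2 - r0 * w2 - s2 * t0 + r2 * w0) ^+ 2 + (r0 * t3 + s0 * w3 - r3 * t0 - s3 * w0) ^+ 2 + (s0 * t3 - r0 * w3 - s3 * t0 + r3 * w0) ^+ 2 + (r1 * t2 + s1 * w2 - r2 * t1 - s2 * w1) ^+ 2 + (s1 * t2 - r1 * w2 - s2 * t1 + r2 * w1) ^+ 2 + (r1 * t3 + s1 * w3 - r3 * t1 - s3 * w1) ^+ 2 + (s1 * t3 - r1 * w3 - s3 * t1 + r3 * w1) ^+ 2 + (r2 * t3 + s2 *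 w3 - r3 * t2 - s3 * w2) ^+ 2 + (s2 * t3 - r2 * w3 - s3 * t2 + r3 * w2) ^+ 2.
  ring.
by rewrite !addr_ge0 ?sqr_ge0.
Qed.
Definition gm h : 'M[R[i]]_2 := \matrix_(i < 2, j < 2)
  (((X h i j + X h (2 + i) (2 + j)) / 2) +i* ((Y h i j + Y h (2 + i) (2 + j)) / 2)).

Lemma gm_herm h : hermitian_mx (gm h).
Proof.
apply/matrixP => i j; rewrite /adjmx !mxE.
case: i => [[|[|//]] Hi]; case: j => [[|[|//]] Hj]; rewrite /= /addn /= /X /Y /=.
all: apply/eqP; rewrite eq_complex /=; apply/andP; split; apply/eqP.
all: by field.
Qed.

Lemma sum_tens (F : 'I_(2 * 2) -> R) :
  \sum_(I < 2 * 2) F I = \sum_(i1 < 2) \sum_(i2 < 2) F (mxtens_index (i1, i2)).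
Proof.
rewrite pair_big /= (reindex (@mxtens_index 2 2)) /=.
  by apply: eq_bigr => -[i j].
by exists (@mxtens_unindex 2 2) => p _; [apply: mxtens_indexK | apply: mxtens_unindexK].
Qed.

Lemma frob h : hermitian_mx h ->
  \sum_(I < 2 * 2) \sum_(J < 2 * 2) cabs2 ((h - (1%:M : 'M[R[i]]_2) *t gm h) I J)
  = \sum_(a < 4) ((P h a - Q h a) ^+ 2 + 4 * cabs2 (Z h a)).
Proof.
move=> H.
rewrite sum_tens.
under eq_bigr => i1 _ do under eq_bigr => i2 _ do rewrite sum_tens.
rewrite !big_ord_recl !big_ord0 !addr0.
rewrite !mxE !mxtens_indexK !(hX h H) /=.
rewrite /= /muln /addn /= /P /Q /Z /X /Y /=.
rewrite /bump /= ?mulr1n ?mulr0n.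
rewrite -[(1 : R[i])]/(1 +i* 0) -[(0 : R[i])]/(0 +i* 0).
rewrite /real_complex_def; simpc; rewrite /cabs2 /=.
by field.
Qed.
Lemma vbound (M : 'M[R[i]]_(2 * 2)) (v : 'cV[R[i]]_(2 * 2)) : vnorm v = 1 ->
  vnorm (M *m v) ^+ 2 <= \sum_(I < 2 * 2) \sum_(J < 2 * 2) cabs2 (M I J).
Proof.
rewrite /vnorm => Hv.
have s1 : \sum_(J < 2 * 2) cabs2 (v J 0) = 1.
  rewrite -[RHS](expr1n _ 2) -Hv sqr_sqrtr //.
  by apply: sumr_ge0 => J _; apply: cabs2_ge0.
rewrite sqr_sqrtr; last by apply: sumr_ge0 => J _; apply: cabs2_ge0.
apply: ler_sum => I _; rewrite mxE.
have := cs4 (fun J => M I J) (fun J => v J 0).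
by rewrite s1 mulr1.
Qed.

Definition e0 : 'cV[R[i]]_(2 * 2) := \col_(i < 2 * 2) (if val i == 0%N then 1 else 0).

Lemma vnorm_e0 : vnorm e0 = 1.
Proof.
rewrite /vnorm !big_ord_recl big_ord0 !mxE /=.
rewrite -[(1 : R[i])]/(1 +i* 0) -[(0 : R[i])]/(0 +i* 0) /cabs2 /=.
have -> : (1 ^+ 2 + 0 ^+ 2 + (0 ^+ 2 + 0 ^+ 2 + (0 ^+ 2 + 0 ^+ 2 + (0 ^+ 2 + 0 ^+ 2 + 0)))) = 1 :> R.
  by rewrite !expr0n /= expr1n !addr0.
by rewrite sqrtr1.
Qed.

Lemma main (eta : R) (h : 'M[R[i]]_(2 * 2)) :
  hermitian_mx h -> ~ s_gapped h eta ->
  exists g : 'M[R[i]]_2,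
    hermitian_mx g /\ opnorm (h - (1%:M : 'M[R[i]]_2) *t g) <= 4 * eta.
Proof.
move=> Hh Hng.
have Hd := decomp h Hh.
have gapb : forall a, spectral_gap (M2 (P h a) (Q h a) (Z h a)) < eta.
  move=> a; rewrite ltNge; apply/negP => ha; apply: Hng.
  by exists (fun a => M2 (P h a) (Q h a) (Z h a)); split => //; exists a.
have Sa : forall a, (P h a - Q h a) ^+ 2 + 4 * cabs2 (Z h a) < eta ^+ 2 /\ 0 < eta.
  move=> a; have [h1 h2] := gap_M2 (P h a) (Q h a) (Z h a); have := gapb a.
  by move=> h3; split; nra.
have eta0 : 0 < eta by case: (Sa ord0).
have Fb : \sum_(a < 4) ((P h a - Q h a) ^+ 2 + 4 * cabs2 (Z h a)) <= 4 * eta ^+ 2.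
  rewrite !big_ord_recl big_ord0 addr0.
  have [s0 _] := Sa ord0.
  have [s1 _] := Sa (lift ord0 ord0).
  have [s2 _] := Sa (lift ord0 (lift ord0 ord0)).
  have [s3 _] := Sa (lift ord0 (lift ord0 (lift ord0 ord0))).
  lra.
exists (gm h); split; first exact: gm_herm.
rewrite /opnorm; apply: ge_sup.
  by exists (vnorm ((h - (1%:M : 'M[R[i]]_2) *t gm h) *m e0)), e0 => //; apply: vnorm_e0.
move=> y [v Hv <-].
have := vbound (h - (1%:M : 'M[R[i]]_2) *t gm h) v Hv.
rewrite frob // => hb.
have vn0 : 0 <= vnorm ((h - (1%:M : 'M[R[i]]_2) *t gm h) *m v) by rewrite /vnorm sqrtr_ge0.
nra.
Qed.
End S.

Theorem theorem4p5 (R : realType) (eta : R) (h : 'M[R[i]]_(2 * 2)) :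
  hermitian_mx h -> ~ s_gapped h eta ->
  exists g : 'M[R[i]]_2,
    hermitian_mx g /\ opnorm (h - (1%:M : 'M[R[i]]_2) *t g) <= 4 * eta.
Proof. exact: main. Qed.
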